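(* Let $d\ge1$ and suppose a set of $d$ elements (a gap) is partitioned into $\ell$ nonempty intervals $I_1,\dots,I_\ell$, consecutive by rank, and that for some $0\le p\le \ell$ the intervals $I_1,\dots,I_p$ are designated left-side and $I_{p+1},\dots,I_\ell$ right-side. Suppose the following balance condition holds: for every left-side interval $I_j$ with $j<p$, the number of elements in $I_1\cup\dots\cup I_{j-1}$ is strictly less than $|I_j|+|I_{j+1}|$; and symmetrically, for every right-side interval $I_j$ with $j>p+1$, the number of elements in $I_{j+1}\cup\dots\cup I_\ell$ is strictly less than $|I_j|+|I_{j-1}|$. Then $\ell\le 4\log(d)$.
   Context: $\log(x):=\max(\log_2 x,1)$, with $\log_2$ the binary logarithm. The balance condition is the negation of the merging rule: a left-side interval that is not the rightmost left-side interval is merged into its right neighbour when the number of elements left of it in the gap is at least the sum of its size and its right neighbour's size (and symmetrically on the right side). *)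

(* Defs.v *)
From Stdlib Require Import Reals.
From mathcomp Require Import all_boot.

Definition log2 (x : R) : R := Rdiv (ln x) (ln 2).
(* log(x) := max(log2 x, 1) as in the paper *)
Definition logm (x : R) : R := Rmax (log2 x) 1.

(* Main.v *)
Require Import Defs.
From Stdlib Require Import Reals.
From mathcomp Require Import all_boot.
From Stdlib Require Import Lra.
From mathcomp Require Import zify.

Lemma dbl (a : nat -> nat) n : (1 <= a 1)%N -> ((2 <= n)%N -> (2 <= a 2)%N) ->
  (forall m, (1 <= m)%N -> (m.+2 <= n)%N -> (2 * a m < a m.+2)%N) ->
  forall m, (1 <= m <= n)%N -> (2^(m.+1) <= (a m).+1 ^ 2)%N.
Proof.
move=> h1 h2 hs.
suff H : forall k, ((k.+1 <= n)%N -> (2^(k.+2) <= (a k.+1).+1 ^ 2)%N) /\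
                   ((k.+2 <= n)%N -> (2^(k.+3) <= (a k.+2).+1 ^ 2)%N).
  move=> [|m] /andP [hm hn] //. by case: (H m) => + _; apply.
elim=> [|k [IH1 IH2]].
  split=> [_|hn]; rewrite !expnS expn0; [nia|]. have := h2 hn. nia.
split=> // hn. have := hs k.+1 isT hn. have := IH1 (ltnW (ltnW hn)).
rewrite !expnS. nia.
Qed.

Lemma comb {p r L R : nat} :
  (p = 0 \/ 2^(p.+1) <= (L.+1)^2)%N -> (p = 0 -> L = 0)%N ->
  (r = 0 \/ 2^(r.+1) <= (R.+1)^2)%N -> (r = 0 -> R = 0)%N ->
  (2^(p + r) <= (maxn (L + R) 2)^4)%N.
Proof.
move=> hp hp0 hr hr0. rewrite expnD.
have hm : (L + R <= maxn (L+R) 2)%N by apply: leq_maxl.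
have hm2 : (2 <= maxn (L+R) 2)%N by apply: leq_maxr.
set K := maxn (L+R) 2 in hm hm2 *.
have hK4 : forall x, (x <= K -> (x.+1)^2 <= 2 * K^4)%N.
  move=> x hx. have : (x.+1 <= 2 * K)%N by lia.
  move=> h. apply: leq_trans (_ : (2*K)^2 <= _)%N.
    by rewrite leq_exp2r.
  have : (4 * K^2 <= 2 * K^4)%N. have: (4 <= K^2)%N by nia. nia.
  rewrite expnMn. lia.
case: hp => [->|hp]; case: hr => [->|hr].
- rewrite !expn0; nia.
- rewrite expn0 mul1n. have := hK4 R (leq_trans (leq_addl _ _) hm).
  rewrite expnS in hr. nia.
- rewrite expn0 muln1. have := hK4 L (leq_trans (leq_addr _ _) hm).
  rewrite expnS in hp. nia.
- rewrite !expnS in hp hr.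
  have L1 : (1 <= L)%N. have := expn_gt0 2 p. nia.
  have R1 : (1 <= R)%N. have := expn_gt0 2 r. nia.
  have h1 : (L.+1 * R.+1 <= (L+R)^2)%N by nia.
  have h2 : (L.+1 * R.+1 <= K^2)%N.
    apply: leq_trans h1 _. by rewrite leq_exp2r.
  have h3 : ((L.+1 * R.+1)^2 <= K^4)%N.
    have -> : (K^4 = (K^2)^2)%N by rewrite -expnM.
    by rewrite leq_exp2r.
  rewrite expnMn in h3.
  have := leq_mul hp hr. nia.
Qed.

Open Scope R_scope.
Lemma INR_expn m n : INR (m ^ n)%N = INR m ^ n.
Proof. elim: n => [|n IH] //=. by rewrite expnS -multE mult_INR IH. Qed.
Lemma real_part (l K d : nat) : (2 <= K)%N -> K = maxn d 2 -> (2^l <= K^4)%N ->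
  Rle (INR l) (Rmult (INR 4) (Rmax (Rdiv (ln (INR d)) (ln 2)) 1)).
Proof.
move=> hK2 hK hl.
have ln2 : (0 < ln 2) by rewrite -ln_1; apply: ln_increasing; lra.
have k2 : (2 <= INR K) by apply: (le_INR 2); apply/leP.
have hr : (2 ^ l <= INR K ^ 4).
  have H : INR (2^l) <= INR (K^4) by apply: le_INR; exact/leP.
  rewrite !INR_expn in H. replace (INR 2) with 2 in H by (simpl; ring). exact H.
have hln : (INR l * ln 2 <= INR 4 * ln (INR K)).
  rewrite -!ln_pow; try lra. have p0 : 0 < 2 ^ l by apply: pow_lt; lra.
  case: hr => [h|->]; [left; exact: ln_increasing | right; reflexivity].
have hm : (ln (INR K) / ln 2 <= Rmax (ln (INR d) / ln 2) 1).
  case: (leqP d 2) => hd.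
  - have -> : K = 2%N :> nat by rewrite hK; apply/maxn_idPr.
    have -> : INR 2 = 2%R by [].
    apply: Rle_trans (Rmax_r _ _). right; field; lra.
  - have -> : K = d by rewrite hK; apply/maxn_idPl/ltnW.
    exact: Rmax_l.
have h4 : (0 <= INR 4) by apply: pos_INR.
apply: Rle_trans (Rmult_le_compat_l _ _ _ h4 hm).
apply: (Rmult_le_reg_r (ln 2)) => //.
have -> : (INR 4 * (ln (INR K) / ln 2) * ln 2 = INR 4 * ln (INR K)) by field; lra.
exact hln.
Qed.

Close Scope R_scope.

Theorem lemma6p2 (d l p : nat) (s : nat -> nat) :
  (1 <= d)%N ->
  (p <= l)%N ->
  (forall j, (1 <= j <= l)%N -> (0 < s j)%N) ->
  (\sum_(1 <= i < l.+1) s i)%N = d ->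
  (forall j, (1 <= j < p)%N ->
     (\sum_(1 <= i < j) s i < s j + s j.+1)%N) ->
  (forall j, (p.+1 < j <= l)%N ->
     (\sum_(j.+1 <= i < l.+1) s i < s j + s j.-1)%N) ->
  Rle (INR l) (Rmult (INR 4) (logm (INR d))).
Proof.
move=> hd hpl hpos hsum hL hR.
set L := (\sum_(1 <= i < p.+1) s i)%N.
set Rr := (\sum_(p.+1 <= i < l.+1) s i)%N.
have hdLR : d = (L + Rr)%N by rewrite -hsum /L /Rr -big_cat_nat.
pose a m := (\sum_(1 <= i < m.+1) s i)%N.
pose b m := (\sum_(l.+1 - m <= i < l.+1) s i)%N.
have hp : (p = 0 \/ 2^(p.+1) <= (L.+1)^2)%N.
  case: (posnP p) => [->|p0]; [by left|right].
  apply: (@dbl a p); last lia.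
  - rewrite /a big_nat1. apply: hpos. lia.
  - move=> h2. rewrite /a big_nat_recr //= big_nat1.
    have := hpos 1%N. have := hpos 2%N. lia.
  - move=> m hm hmn. have -> : a m.+2 = (a m + s m.+1 + s m.+2)%N.
      by rewrite [a m.+2]/a big_nat_recr // big_nat_recr.
    have := hL m.+1. rewrite /a /=. lia.
have hr : ((l - p) = 0 \/ 2^((l-p).+1) <= (Rr.+1)^2)%N.
  case E: (l - p)%N => [|r]; [by left|right].
  have -> : Rr = b r.+1 by rewrite /Rr /b (_ : l.+1 - r.+1 = p.+1)%N //; lia.
  apply: (@dbl b r.+1); last lia.
  - rewrite /b. have -> : (l.+1 - 1 = l)%N by lia. rewrite big_nat1. apply: hpos. lia.
  - move=> h2. rewrite /b. have -> : (l.+1 - 2 = l.-1)%N by lia.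
    rewrite big_ltn; last lia. have -> : (l.-1.+1 = l)%N by lia. rewrite big_nat1.
    have := hpos l. have := hpos l.-1. lia.
  - move=> m hm hmn.
    have -> : b m.+2 = (s (l-m).-1 + s (l-m) + b m)%N.
      rewrite [b m.+2]/b (_ : l.+1 - m.+2 = (l-m).-1)%N; last lia.
      rewrite big_ltn; last lia. rewrite (_ : (l-m).-1.+1 = l-m)%N; last lia.
      rewrite big_ltn; last lia. rewrite /b (_ : l.+1 - m = (l-m).+1)%N; last lia. lia.
    have := hR (l-m)%N. rewrite /b (_ : l.+1 - m = (l-m).+1)%N; last lia. lia.
have hp0 : (p = 0 -> L = 0)%N by move=> p0; rewrite /L p0 big_geq.
have hr0 : (l - p = 0 -> Rr = 0)%N.
  move=> e; rewrite /Rr big_geq //. lia.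
have hc := comb hp hp0 hr hr0.
rewrite (_ : (p + (l - p) = l)%N) in hc; last lia.
rewrite -hdLR in hc.
exact: (@real_part l (maxn d 2) d (leq_maxr d 2) erefl hc).
Qed.
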